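(* For any finite poset $(X,\leqslant)$ and any derivation out-tree $T=(X,E)$, the pair $(T,\phi_E)$ is a tree-based enforcement scheme.
   Context: For a digraph $G$, $x\rightsquigarrow_G y$ means there is a directed path from $x$ to $y$ in $G$ (with $x\rightsquigarrow_G x$ always). A derivation out-tree for $(X,\leqslant)$ is a spanning out-tree $T=(X,E)$ (rooted tree on vertex set $X$ with arcs oriented away from the root) such that $xy\in E$ implies $y<x$; its root $r$ is the maximum element of $X$. Define $\phi_E\colon X\to2^X$ by $\phi_E(r)=\{r\}$ and, for $x\neq r$, $\phi_E(x)=\{z\in X:\exists y\in X \text{ with } yz\in E,\ x\geqslant z,\ x\not\geqslant y\}$. A tree-based enforcement scheme is a pair $(T,\phi)$ with $T$ a derivation out-tree and $\phi\colon X\to2^X$ such that for all $x\in X$: $x\in\phi(x)$; if $u\leqslant x$ then some $z\in\phi(x)$ has $z\rightsquigarrow_T u$; if $u\not\leqslant x$ then no $z\in\phi(x)$ has $z\rightsquigarrow_T u$. *)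

(* Defs.v *)
From HB Require Import structures.
From mathcomp Require Import all_boot all_order.
Set Implicit Arguments. Unset Strict Implicit. Unset Printing Implicit Defensive.
Import Order.TTheory.
Local Open Scope order_scope.

(* Directed reachability x ~>_T y is [connect E x y]
   (reflexive-transitive closure, so x ~> x always). *)

Definition is_out_tree (X : finType) (E : rel X) (r : X) : Prop :=
  [/\ forall x, ~~ E x r,
      forall y, y != r -> #|[set x | E x y]| = 1
    & forall y, connect E r y].

Definition derivation_out_tree (d : Order.disp_t) (X : finPOrderType d)
    (E : rel X) (r : X) : Prop :=
  is_out_tree E r /\ (forall x y, E x y -> y < x).

Definition phiE (d : Order.disp_t) (X : finPOrderType d) (E : rel X) (r : X)
    (x : X) : {set X} :=
  if x == r then [set r]
  else [set z | [exists y, [&& E y z, z <= x & ~~ (y <= x)]]].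

Definition tree_enforcement_scheme (d : Order.disp_t) (X : finPOrderType d)
    (E : rel X) (r : X) (phi : X -> {set X}) : Prop :=
  derivation_out_tree E r /\
  (forall x : X,
     [/\ x \in phi x,
         (forall u, u <= x -> exists2 z, z \in phi x & connect E z u)
       & (forall u, ~~ (u <= x) -> forall z, z \in phi x -> ~~ connect E z u)]).

(* Main.v *)
Require Import Defs.
From HB Require Import structures.
From mathcomp Require Import all_boot all_order.
Import Order.TTheory.
Local Open Scope order_scope.

Lemma desc_le (d : Order.disp_t) (X : finPOrderType d) (E : rel X) :
  (forall x y, E x y -> y < x) -> forall a b, connect E a b -> b <= a.
Proof.
move=> H a b /connectP [p pth ->].
elim: p a pth => [|c p IH] a /=; first by [].
case/andP => Eac pth; exact: le_trans (IH _ pth) (ltW (H _ _ Eac)).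
Qed.

Lemma first_below (d : Order.disp_t) (X : finPOrderType d) (E : rel X) (x : X) :
  forall p a, path E a p -> ~~ (a <= x) -> last a p <= x ->
  exists z, [/\ (exists y, [&& E y z, z <= x & ~~ (y <= x)]) & connect E z (last a p)].
Proof.
elim=> [|b p IH] a /=; first by move=> _ /negP.
case/andP => Eab pth nax lx.
case: (boolP (b <= x)) => bx.
  exists b; split; first by exists a; rewrite Eab bx nax.
  by apply/connectP; exists p.
exact: IH pth bx lx.
Qed.

Theorem lemma2 (d : Order.disp_t) (X : finPOrderType d) (E : rel X) (r : X) :
  derivation_out_tree E r -> tree_enforcement_scheme E r (phiE E r).
Proof.
move=> [[Hr H1 Hc] Hlt] ; split; first by split.
have Hdesc := @desc_le _ _ E Hlt.
move=> x; rewrite /phiE.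
case: eqP => [->|xr].
  split; first by rewrite in_set1.
  - by move=> u _; exists r; rewrite ?in_set1.
  - by move=> u nu z; rewrite in_set1 => /eqP ->; apply/negP => /Hdesc; apply/negP.
split.
- have /eqP := H1 x (introN eqP xr).
  case/cards1P => y Hy.
  have : y \in [set x0 | E x0 x] by rewrite Hy in_set1.
  rewrite inE => Eyx.
  rewrite inE; apply/existsP; exists y; rewrite Eyx lexx /=.
  by rewrite lt_geF // Hlt.
- move=> u ux.
  have /connectP [p pth ue] := Hc u.
  have nrx : ~~ (r <= x).
    apply/negP => rx; apply: xr; apply/eqP; rewrite eq_le rx andbT.
    exact: (Hdesc _ _ (Hc x)).
  have [z [[y Hy] cz]] := @first_below _ _ E x _ _ pth nrx (eq_ind _ (fun w => w <= x) ux _ ue).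
  by exists z; [rewrite inE; apply/existsP; exists y | rewrite ue].
- move=> u nu z; rewrite inE => /existsP [y /and3P [_ zx _]].
  apply/negP => /Hdesc uz; move/negP: nu; apply; exact: le_trans uz zx.
Qed.
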